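(* Consider the game among $N$ domains $i = 1,\dots,N$ in which domain $i$ chooses quality $q_i \in [0,1]$ and generality $g_i \in [0,1]$ and receives payoff \[ \pi_i = \alpha_i q_i (1 + \beta g_i) + \lambda \sum_{j \neq i} q_j g_j - \Big(\tfrac{\gamma_q}{2} q_i^2 + \tfrac{\gamma_g}{2} g_i^2 q_i + \kappa g_i\Big), \] with parameters $\alpha_i > 0$, $\beta \ge 0$, $\lambda > 0$, $\gamma_q, \gamma_g > 0$, $\kappa \ge 0$. Let $(q_i^*, g_i^{NE})_{i=1}^N$ be a Nash equilibrium with $q_i^* > 0$ for all $i$. If $\alpha_i \beta < \kappa / q_i^*$ for all domains $i$, then $g_i^{NE} = 0$ for all $i$.
   Context: The model describes an organization with $N$ domain teams producing data products; $q_i$ is the quality and $g_i$ the cross-domain generality of domain $i$'s product. The situation $g_i^{NE}=0$ for all $i$ is called the ''data mesh trap''. *)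

(* Defs.v *)
From mathcomp Require Import all_boot all_order all_algebra.
Set Implicit Arguments. Unset Strict Implicit. Unset Printing Implicit Defensive.
Import Order.TTheory GRing.Theory Num.Theory.
Local Open Scope ring_scope.

Definition payoff (R : realFieldType) (N : nat) (alpha : 'I_N -> R)
  (beta lambda gq gg kappa : R) (q g : 'I_N -> R) (i : 'I_N) : R :=
  alpha i * q i * (1 + beta * g i)
  + lambda * (\sum_(j < N | j != i) q j * g j)
  - (gq / 2 * q i ^+ 2 + gg / 2 * g i ^+ 2 * q i + kappa * g i).

Definition upd (R : realFieldType) (N : nat) (f : 'I_N -> R) (i : 'I_N) (x : R)
  : 'I_N -> R := fun j => if j == i then x else f j.

Definition is_nash (R : realFieldType) (N : nat) (alpha : 'I_N -> R)
  (beta lambda gq gg kappa : R) (q g : 'I_N -> R) : Prop :=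
  (forall i, 0 <= q i <= 1 /\ 0 <= g i <= 1) /\
  (forall i (qi gi : R), 0 <= qi <= 1 -> 0 <= gi <= 1 ->
     payoff alpha beta lambda gq gg kappa (upd q i qi) (upd g i gi) i
     <= payoff alpha beta lambda gq gg kappa q g i).

(* Main.v *)
Require Import Defs.
From mathcomp Require Import all_boot all_order all_algebra.
From mathcomp Require Import lra.
Import Order.TTheory GRing.Theory Num.Theory.
Local Open Scope ring_scope.

Theorem corollary1 (R : realFieldType) (N : nat) (alpha : 'I_N -> R)
  (beta lambda gq gg kappa : R) (qstar gNE : 'I_N -> R) :
  (forall i, 0 < alpha i) -> 0 <= beta -> 0 < lambda -> 0 < gq -> 0 < gg ->
  0 <= kappa ->
  is_nash alpha beta lambda gq gg kappa qstar gNE ->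
  (forall i, 0 < qstar i) ->
  (forall i, alpha i * beta < kappa / qstar i) ->
  forall i, gNE i = 0.
Proof.
move=> ha hb hl hgq hgg hk [hb01 hN] hq hab i.
have [/andP[q0 q1] /andP[g0 g1]] := hb01 i.
have := hN i (qstar i) 0 (ltac:(by apply/andP)) (ltac:(by rewrite lexx ler01)).
rewrite /payoff /upd eqxx.
have -> : \sum_(j < N | j != i) (if j == i then qstar i else qstar j) *
             (if j == i then 0 else gNE j) = \sum_(j < N | j != i) qstar j * gNE j.
  by apply: eq_bigr => j /negbTE ->.
move=> H.
have qi := hq i.
have habq : alpha i * qstar i * beta < kappa.
  have := hab i; rewrite ltr_pdivlMr // => h; lra.
set S := \sum_(j < N | j != i) qstar j * gNE j in H.
set g := gNE i in H g0 *.
set q := qstar i in H qi habq *.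
set a := alpha i in H habq *.
have key : 0 <= g * (a * q * beta - gg / 2 * g * q - kappa) by nra.
apply/eqP; rewrite eq_le g0 andbT.
rewrite leNgt; apply/negP => gpos.
have : a * q * beta - gg / 2 * g * q - kappa < 0.
  have : 0 <= gg * g * q by rewrite !mulr_ge0 // ltW.
  lra.
move=> neg.
have h2 : g * (a * q * beta - gg / 2 * g * q - kappa) < 0 by rewrite pmulr_rlt0.
by rewrite ltNge key in h2.
Qed.
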